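(* Let $p$ be an odd prime and $\lambda$ a nonempty BG-partition. Then $a^*_\lambda$ is even if and only if $p\mid a^*_\lambda$.
   Context: Partitions: $\lambda=(\lambda_1\ge\lambda_2\ge\cdots)$ with finitely many nonzero parts; $l(\lambda)$ = number of nonzero parts; Young diagram $[\lambda]=\{(i,j): i\ge1, 1\le j\le\lambda_i\}$ ($i$ = row, increasing downward). $\lambda'$ is the conjugate; self-conjugate means $\lambda=\lambda'$. $k(\lambda)=\max\{i:\lambda_i\ge i\}$; hook length $h_{ij}=\lambda_i+\lambda'_j-i-j+1$. A BG-partition is a self-conjugate partition with $p\nmid h_{ii}$ for all $1\le i\le k(\lambda)$. Rim and $p$-rim: the rim is the set of nodes $(i,j)\in[\lambda]$ with $(i+1,j+1)\notin[\lambda]$. Label rim nodes $1,2,\dots$ along the rim path from $(1,\lambda_1)$ to $(l(\lambda),1)$. The first $p$-segment is the rim nodes labelled $1,\dots,p$ (or all if fewer). If the last node $(i,j)$ of a $p$-segment lies in the last row, stop; otherwise with $l$ the smallest label in row $i+1$ the next $p$-segment is the rim nodes labelled $l,\dots,l+p-1$ (or up to the last). The $p$-rim is the union of the $p$-segments. $p$-rim*: $U_\lambda=\{(i,j)\in p\text{-rim of }\lambda: i\le j\}$, $L_\lambda=\{(j,i):(i,j)\in U_\lambda\}$, $\mathrm{Rim}^*_p(\lambda)=U_\lambda\cup L_\lambda$, $a^*_\lambda=\#\mathrm{Rim}^*_p(\lambda)$. *)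

(* Defs.v *)
From mathcomp Require Import all_boot.
Set Implicit Arguments. Unset Strict Implicit. Unset Printing Implicit Defensive.

Definition is_partition (s : seq nat) : bool :=
  sorted geq s && (0 \notin s).

(* lambda_i for i >= 1 (0 beyond the length). *)
Definition part (s : seq nat) (i : nat) : nat := nth 0 s i.-1.

Definition plen (s : seq nat) : nat := size s.

(* Young diagram membership; nodes (i,j) with i = row, j = column, 1-based. *)
Definition in_diag (s : seq nat) (x : nat * nat) : bool :=
  (1 <= x.1) && (1 <= x.2) && (x.2 <= part s x.1).

Definition conj_part (s : seq nat) (j : nat) : nat := count (fun x => j <= x) s.
Definition conjugate (s : seq nat) : seq nat :=
  [seq conj_part s j | j <- iota 1 (part s 1)].

Definition self_conjugate (s : seq nat) : bool := conjugate s == s.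

Definition kdiag (s : seq nat) : nat :=
  \max_(1 <= i < (plen s).+1 | i <= part s i) i.

Definition hook (s : seq nat) (i j : nat) : nat :=
  part s i + conj_part s j + 1 - i - j.

Definition BG_partition (p : nat) (s : seq nat) : bool :=
  self_conjugate s && [forall i : 'I_(kdiag s).+1, (1 <= i) ==> ~~ (p %| hook s i i)].

Definition diag_nodes (s : seq nat) : seq (nat * nat) :=
  [seq (i, j) | i <- iota 1 (plen s), j <- iota 1 (part s i)].

Definition in_rim (s : seq nat) (x : nat * nat) : bool :=
  in_diag s x && ~~ in_diag s (x.1.+1, x.2.+1).

(* order along the rim path from (1,lambda_1) to (l,1):
   rows top to bottom, within a row right to left *)
Definition rim_order (a b : nat * nat) : bool :=
  (a.1 < b.1) || ((a.1 == b.1) && (b.2 <= a.2)).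

(* rim nodes in path order; label k (1-based) is item k-1 *)
Definition rim_seq (s : seq nat) : seq (nat * nat) :=
  sort rim_order (filter (in_rim s) (diag_nodes s)).

(* p-segments, by 0-based positions in rim_seq; fuel-driven recursion *)
Fixpoint prim_aux (p : nat) (s : seq nat) (fuel start : nat) : seq nat :=
  let rs := rim_seq s in
  let n := size rs in
  match fuel with
  | 0 => [::]
  | f.+1 =>
    let stop := minn (start + p) n in
    let seg := iota start (stop - start) in
    let i := (nth (0, 0) rs stop.-1).1 in
    if plen s <= i then seg
    else seg ++ prim_aux p s f (index i.+1 (map fst rs))
  end.

Definition prim_positions (p : nat) (s : seq nat) : seq nat :=
  prim_aux p s (size (rim_seq s)).+1 0.

Definition p_rim (p : nat) (s : seq nat) : seq (nat * nat) :=
  [seq nth (0, 0) (rim_seq s) k | k <- prim_positions p s].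

Definition U_set (p : nat) (s : seq nat) : seq (nat * nat) :=
  [seq x <- p_rim p s | x.1 <= x.2].
Definition L_set (p : nat) (s : seq nat) : seq (nat * nat) :=
  [seq (x.2, x.1) | x <- U_set p s].

Definition rim_star (p : nat) (s : seq nat) : seq (nat * nat) :=
  undup (U_set p s ++ L_set p s).

Definition astar (p : nat) (s : seq nat) : nat := size (rim_star p s).

Example ex_rim : rim_seq [:: 3; 2; 1] = [:: (1,3); (1,2); (2,2); (2,1); (3,1)].
Proof. by []. Qed.
Example ex_prim : p_rim 3 [:: 3; 2; 1] = [:: (1,3); (1,2); (2,2); (3,1)].
Proof. by []. Qed.
Example ex_astar : astar 3 [:: 3; 2; 1] = 5.
Proof. by []. Qed.
Example ex_k : kdiag [:: 3;2;1] = 2.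
Proof. by rewrite /kdiag unlock. Qed.
Example ex_conj : self_conjugate [:: 3; 2; 1].
Proof. by []. Qed.
Example ex_hook : hook [:: 3; 2; 1] 1 1 = 5 /\ hook [:: 3; 2; 1] 2 2 = 1.
Proof. by []. Qed.

(* Main.v *)
Require Import Defs.
From mathcomp Require Import all_boot.
From mathcomp Require Import zify.
Set Implicit Arguments. Unset Strict Implicit. Unset Printing Implicit Defensive.

Section Rim.
Variable s : seq nat.
Hypothesis Hs : is_partition s.

Lemma part_mono a b : 0 < a <= b -> part s b <= part s a.
Proof.
move=> /andP[a0 ab]; rewrite /part.
case: (ltnP b.-1 (size s)) => hb; last by rewrite nth_default.
case/andP: Hs => Hsort _.
have tr : transitive geq by move=> x y z h1 h2; exact: leq_trans h2 h1.
have := sorted_leq_nth tr (@leqnn) 0 Hsort.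
move=> /(_ a.-1 b.-1); rewrite !inE => H; apply: H => //; lia.
Qed.

Lemma part_pos i : 0 < i <= size s -> 0 < part s i.
Proof.
move=> hi; case/andP: Hs => _ H0; rewrite /part lt0n.
apply/negP=> /eqP h.
have hm : i.-1 < size s by lia.
by have := mem_nth 0 hm; rewrite h => h'; rewrite h' in H0.
Qed.

Lemma part_big i : size s < i -> part s i = 0.
Proof. by move=> h; rewrite /part nth_default //; lia. Qed.

Lemma diag_row x : in_diag s x -> 0 < x.1 <= size s.
Proof.
case: x => i j; rewrite /in_diag /= => /andP[/andP[h1 h2] h3].
rewrite h1 /=; case: (leqP i (size s)) => // hi.
by move: h3; rewrite part_big //; lia.
Qed.

Lemma diag_le x : in_diag s x -> x.2 <= part s 1.
Proof.
move=> h; have := diag_row h; move: h; case: x => i j; rewrite /in_diag /=.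
move=> /andP[/andP[h1 h2] h3] _; apply: leq_trans h3 _; apply: part_mono; lia.
Qed.

Lemma mem_diag_nodes x : (x \in diag_nodes s) = in_diag s x.
Proof.
apply/allpairsPdep/idP.
- move=> [i [j [hi hj ->]]]; move: hi hj; rewrite !mem_iota /in_diag /=; lia.
- case: x => i j hx; have := diag_row hx; move: hx; rewrite /in_diag /= => hx hr.
  exists i, j; rewrite !mem_iota; split => //; lia.
Qed.

Lemma mem_rs x : (x \in rim_seq s) = in_rim s x.
Proof. by rewrite /rim_seq mem_sort mem_filter mem_diag_nodes /in_rim; case: in_diag; rewrite ?andbF ?andbT. Qed.

Lemma uniq_rs : uniq (rim_seq s).
Proof.
rewrite /rim_seq sort_uniq filter_uniq // /diag_nodes.
apply: allpairs_uniq_dep; first exact: iota_uniq.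
  by move=> i _; exact: iota_uniq.
by move=> [a1 a2] [b1 b2] _ _ /= [-> ->].
Qed.

Lemma rim_order_tr : transitive rim_order.
Proof. move=> y x z; rewrite /rim_order; case: x y z => [x1 x2] [y1 y2] [z1 z2] /=. 
case: (ltngtP x1 y1); case: (ltngtP y1 z1); rewrite ?orbF ?orbT ?andbF //=; lia. Qed.

Lemma rim_order_total : total rim_order.
Proof. move=> [x1 x2] [y1 y2]; rewrite /rim_order /=.
case: (ltngtP x1 y1) => //= _; exact: leq_total. Qed.

Lemma sorted_rs : sorted rim_order (rim_seq s).
Proof. exact: sort_sorted rim_order_total _. Qed.

Definition ee (x : nat * nat) := x.2 + size s - x.1.

Lemma e_strict x y : in_rim s x -> in_rim s y -> x != y -> rim_order x y -> ee y < ee x.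
Proof.
move=> hx hy; have := diag_row (andP hx).1; have := diag_row (andP hy).1.
move: hx hy; case: x => i j; case: y => i' j'; rewrite /in_rim /in_diag /rim_order /ee /=.
move=> /andP[/andP[/andP[h1 h2] h3] h4] /andP[/andP[/andP[h1' h2'] h3'] h4'] r1 r2 ne.
case/orP.
- move=> lt; have : part s i' <= part s i.+1 by apply: part_mono; lia.
  move: h4; rewrite -leqNgt; lia.
- move=> /andP[/eqP e le]; subst i'; move: ne; rewrite xpair_eqE eqxx /=; lia.
Qed.


Lemma pairwise_strict (T : eqType) (r r' : rel T) (t : seq T) :
  pairwise r t -> uniq t -> {in t &, forall x y, x != y -> r x y -> r' x y} ->
  pairwise r' t.
Proof.
elim: t => //= x t IH /andP[ha hp] /andP[hn hu] H.
apply/andP; split.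
- apply/allP => y hy; apply: H; rewrite ?inE ?eqxx ?hy ?orbT //.
    by apply/negP => /eqP exy; rewrite exy hy in hn.
  exact: (allP ha).
- apply: IH => // a b ha' hb'; apply: H; rewrite inE ?ha' ?hb' orbT //.
Qed.

Definition N0 := part s 1 + size s - 1.

Lemma rim_exists y : 0 < y <= N0 -> exists x, in_rim s x && (ee x == y).
Proof.
move=> hy.
pose P i := (0 < i) && (size s < i + y) && in_diag s (i, i + y - size s).
have exP : exists i, P i.
  case: (leqP (size s) y) => hl.
  - exists 1; rewrite /P /in_diag /=; apply/andP; split; first lia.
    rewrite /N0 in hy; lia.
  - exists (size s - y + 1); rewrite /P /in_diag /=.
    have hp : 0 < part s (size s - y + 1) by apply: part_pos; lia.
    apply/andP; split; first lia. apply/andP; split; first lia. lia.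
have ubP : forall i, P i -> i <= size s.
  by move=> i /andP[_ /diag_row /= h]; lia.
case: (ex_maxnP exP ubP) => i /andP[/andP[h0 h1] h2] hmax.
exists (i, i + y - size s); rewrite /in_rim h2 /ee /=; apply/andP; split; last by apply/eqP; lia.
have -> : (i + y - size s).+1 = i.+1 + y - size s by lia.
apply/negP => hd; have : P i.+1 by rewrite /P hd; apply/andP; split; lia.
by move/hmax; rewrite ltnn.
Qed.

Lemma map_ee_rs : map ee (rim_seq s) = rev (iota 1 N0).
Proof.
apply: (@irr_sorted_eq _ (fun a b => b < a)).
- by move=> a b c h1 h2; apply: ltn_trans h2 h1.
- by move=> a; rewrite ltnn.
- apply: pairwise_sorted; rewrite pairwise_map.
  apply: (@pairwise_strict _ rim_order).
  + by rewrite -sorted_pairwise; [exact: sorted_rs | exact: rim_order_tr].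
  + exact: uniq_rs.
  + by move=> x y hx hy; rewrite !mem_rs in hx hy; exact: e_strict.
- rewrite rev_sorted; exact: iota_ltn_sorted.
- move=> y; rewrite mem_rev mem_iota; apply/mapP/idP.
  + move=> [x hx ->]; rewrite mem_rs in hx.
    have := diag_row (andP hx).1; have := diag_le (andP hx).1.
    move: hx; case: x => i j; rewrite /in_rim /in_diag /ee /N0 /= => /andP[/andP[/andP[h1 h2] h3] _]; lia.
  + move=> hy; have [x /andP[hx /eqP <-]] : exists x, in_rim s x && (ee x == y).
      by apply: rim_exists; lia.
    by exists x; rewrite ?mem_rs.
Qed.

Lemma size_rs : size (rim_seq s) = N0.
Proof. by rewrite -(size_map ee) map_ee_rs size_rev size_iota. Qed.

Lemma ee_nth q : q < N0 -> ee (nth (0,0) (rim_seq s) q) = N0 - q.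
Proof.
move=> hq; rewrite -(nth_map _ 0) ?size_rs // map_ee_rs nth_rev ?size_iota //.
rewrite nth_iota; lia.
Qed.

Lemma rim_nth q : q < N0 -> in_rim s (nth (0,0) (rim_seq s) q).
Proof. by move=> hq; rewrite -mem_rs mem_nth // size_rs. Qed.


Lemma row_mono q q' : q <= q' < N0 ->
  (nth (0,0) (rim_seq s) q).1 <= (nth (0,0) (rim_seq s) q').1.
Proof.
move=> /andP[hqq hq']; case: (ltngtP q q') hqq => // hlt _; last by rewrite hlt.
rewrite leqNgt; apply/negP => hr.
have hq : q < N0 by lia.
have := e_strict (rim_nth hq') (rim_nth hq).
rewrite nth_uniq ?size_rs ?uniq_rs //.
have -> : (q' != q) by lia.
rewrite /rim_order hr /= !ee_nth //; move=> /(_ isT isT); lia.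
Qed.

Lemma first_row r : 0 < r <= size s ->
  [/\ index r (map fst (rim_seq s)) < N0,
  index r (map fst (rim_seq s)) + part s r + size s = N0 + r &
  (nth (0,0) (rim_seq s) (index r (map fst (rim_seq s)))).1 = r].
Proof.
move=> hr.
have hx0 : in_rim s (r, part s r).
  rewrite /in_rim /in_diag /=; have := part_pos hr; have : part s r.+1 <= part s r by apply: part_mono; lia.
  move=> h1 h2; apply/andP; split; first by apply/andP; split => //; lia.
  by rewrite -leqNgt.
have hmem : (r, part s r) \in rim_seq s by rewrite mem_rs.
set idx := index (r, part s r) (rim_seq s).
have hidx : idx < N0 by rewrite -size_rs index_mem.
have hnth : nth 0 (map fst (rim_seq s)) idx = r.
  by rewrite (nth_map (0,0)) ?size_rs // nth_index.
set st := index r (map fst (rim_seq s)).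
have hst : st <= idx by rewrite /st -{1}hnth index_nth // size_map size_rs.
have hstN : st < N0 by lia.
have hrow : (nth (0,0) (rim_seq s) st).1 = r.
  have hin : r \in map fst (rim_seq s) by rewrite -hnth mem_nth // size_map size_rs.
  by rewrite -(nth_map _ 0) ?size_rs // nth_index.
have e1 := ee_nth hstN; have e2 := ee_nth hidx.
rewrite /idx nth_index // in e2.
have := rim_nth hstN; move: e1 hrow.
case: (nth (0,0) (rim_seq s) st) => i j; rewrite /ee /in_rim /in_diag /= => e1 hi.
subst i => /andP[/andP[/andP[_ _] h3] _].
move: e2; rewrite /ee /= => e2.
split => //; lia.
Qed.


Lemma count_iota_le m a k : count (fun q => q <= m) (iota a k) = minn k (m.+1 - a).
Proof.
elim: k a => [|k IH] a /=; first by rewrite min0n.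
rewrite IH; case: (leqP a m) => h /=; lia.
Qed.

Variable p : nat.
Hypothesis p0 : 0 < p.
Variable m : nat.
Hypothesis hm : m < N0.

Definition Qprop (out : seq nat) :=
  exists a, (m \notin out /\ count (fun q => q <= m) out = a * p) \/
     (m \in out /\ exists st' r', [/\ 0 < r' <= size s, st' + part s r' + size s = N0 + r', st' <= m &
        count (fun q => q <= m) out = a * p + (m - st' + 1)]).

Lemma combine st r rest (stop := minn (st + p) N0) :
  0 < r <= size s -> st + part s r + size s = N0 + r ->
  all (fun q => stop <= q < N0) rest -> uniq rest -> Qprop rest ->
  let out := iota st (stop - st) ++ rest in
  [/\ all (fun q => st <= q < N0) out, uniq out & Qprop out].
Proof.
move=> hr hg hall hu hQ /=.
have hpr := part_pos hr.
have hst : st < N0 by lia.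
have hmemseg q : (q \in iota st (stop - st)) = (st <= q < stop).
  by rewrite mem_iota; lia.
split.
- rewrite all_cat; apply/andP; split.
    by apply/allP => q; rewrite hmemseg /stop; lia.
  by apply/allP => q hq; have := allP hall q hq; lia.
- rewrite cat_uniq iota_uniq hu /= andbT; apply/hasPn => q hq.
  by rewrite hmemseg; have := allP hall q hq; lia.
- rewrite /Qprop count_cat count_iota_le mem_cat hmemseg.
  case: (ltnP m stop) => hms.
  + have hc : count (fun q => q <= m) rest = 0.
      rewrite (eq_in_count (a2 := pred0)) ?count_pred0 // => q hq /=.
      by have := allP hall q hq; lia.
    have hn : m \notin rest by apply/negP => hq; have := allP hall m hq; lia.
    rewrite hc (negbTE hn) orbF addn0.
    case: (leqP st m) => hsm.
    * exists 0; right; split; first by lia.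
      exists st, r; split => //; lia.
    * exists 0; left; split; first by lia. lia.
  + have hstop : stop = st + p by rewrite /stop; lia.
    case: hQ => a [[hn hc] | [hin [st' [r' [h1 h2 h3 h4]]]]].
    * exists a.+1; left; rewrite hc (negbTE hn) orbF; split; first by lia. lia.
    * exists a.+1; right; rewrite hin orbT; split => //.
      exists st', r'; split => //; lia.
Qed.

Lemma prim_inv f st r : 0 < r <= size s -> st + part s r + size s = N0 + r ->
  let out := prim_aux p s f st in
  [/\ all (fun q => st <= q < N0) out, uniq out & Qprop out].
Proof.
elim: f st r => [|f IH] st r hr hg /=.
  by split => //; exists 0; left; rewrite mul0n.
rewrite size_rs /plen.
have hpr := part_pos hr.
have hst : st < N0 by lia.
set stop := minn (st + p) N0.
set i := (nth (0, 0) (rim_seq s) stop.-1).1.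
case: ifP => hi.
- rewrite -[iota _ _]cats0; apply: (combine hr hg) => //.
  by exists 0; left.
- have hi' : 0 < i.+1 <= size s by lia.
  case: (first_row hi') => h1 h2 h3.
  set st2 := index i.+1 _ in h1 h2 h3 *.
  have hst2 : stop <= st2.
    rewrite leqNgt; apply/negP => hlt.
    have := @row_mono st2 stop.-1; rewrite h3 -/i; lia.
  case: (IH st2 i.+1 hi' h2) => ha hu hQ.
  apply: (combine hr hg) => //.
  by apply/allP => q hq; have := allP ha q hq; lia.
Qed.

End Rim.

Lemma conj_eq s r : self_conjugate s -> 0 < r <= part s 1 -> conj_part s r = part s r.
Proof.
move=> /eqP hc hr.
have hr' : r.-1 < size (iota 1 (part s 1)) by rewrite size_iota; lia.
rewrite /part -{2}hc /conjugate (nth_map 0) // nth_iota; last by move: hr'; rewrite size_iota.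
congr conj_part; lia.
Qed.

Theorem lemma3p20 (p : nat) (s : seq nat) :
  prime p -> odd p -> is_partition s -> s != [::] -> BG_partition p s ->
  (~~ odd (astar p s) <-> p %| astar p s).
Proof.
move=> pp _ Hs sn0 /andP[hsc /forallP hBG].
have p0 : 0 < p by exact: prime_gt0.
have hl : 0 < size s by case: s sn0 {Hs hsc hBG}.
have hl1 : size s = part s 1.
  by move/eqP: (hsc) => hc; rewrite -{1}hc /conjugate size_map size_iota.
have h1 := @part_pos s Hs 1.
set m := (part s 1).-1.
have hN : N0 s = m.*2.+1 by rewrite /N0 /m; lia.
have hm : m < N0 s by rewrite hN; lia.
set pos := prim_positions p s.
have [hall hupos hQ] : [/\ all (fun q => 0 <= q < N0 s) pos, uniq pos & Qprop s p m pos].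
  apply: (@prim_inv s Hs p p0 m hm _ 0 1) => //; rewrite /N0; lia.
have key q : q < N0 s -> (nth (0,0) (rim_seq s) q).2 + q = m + (nth (0,0) (rim_seq s) q).1.
  move=> hq; have := ee_nth Hs hq; have := diag_row Hs (andP (rim_nth Hs hq)).1.
  rewrite /ee hN; move: hq; rewrite hN /m; lia.
set rs := rim_seq s.
set F := [seq q <- pos | q <= m].
have hF q : q \in F -> q <= m /\ q < N0 s.
  by rewrite mem_filter => /andP[h1' h2]; split => //; have := allP hall q h2; lia.
set A := map (nth (0,0) rs) F.
have hU : U_set p s = A.
  rewrite /U_set /p_rim filter_map /A /F; congr map; apply: eq_in_filter => q hq /=.
  have := key q; have := allP hall q hq; rewrite /rs; lia.
have huF : uniq F by exact: filter_uniq.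
have huA : uniq A.
  rewrite map_inj_in_uniq // => q q' hq hq' e; apply/eqP.
  have [_ h1q] := hF q hq; have [_ h1q'] := hF q' hq'.
  by rewrite -(nth_uniq (0,0) _ _ (uniq_rs s)) ?size_rs // e.
set B := [seq (x.2, x.1) | x <- A].
have huB : uniq B by rewrite map_inj_uniq // => [[a b] [c d]] /= [-> ->].
have hcount : count (fun x => x \in B) A = (m \in pos).
  rewrite count_map (eq_in_count (a2 := pred1 m)).
    by rewrite count_uniq_mem // mem_filter leqnn.
  move=> q hq /=; have [hqm hqN] := hF q hq; apply/idP/idP.
  - move/mapP => [y /mapP [q' hq' ->] hxy].
    have [hqm' hqN'] := hF q' hq'.
    have k1 := key q hqN; have k2 := key q' hqN'.
    move: hxy k1 k2; rewrite /rs.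
    case: (nth _ _ q) => a b; case: (nth _ _ q') => c d /= [-> ->]; lia.
  - move/eqP => eqm; subst q; apply/mapP; exists (nth (0,0) rs m).
      by apply/mapP; exists m.
    have := key m hqN; rewrite /rs; case: (nth _ _ m) => a b /= e; congr pair; lia.
have hast : astar p s = (count (fun q => q <= m) pos - (m \in pos)) + count (fun q => q <= m) pos.
  rewrite /astar /rim_star /L_set hU -/B undup_cat (undup_id huA) (undup_id huB) size_cat.
  have hsA : size A = count (fun q => q <= m) pos by rewrite size_map size_filter.
  have hsB : size B = size A by rewrite size_map.
  have hc2 : count (fun x => x \notin B) A = size A - (m \in pos).
    rewrite -hcount -(count_predC (fun x => x \in B)) addKn.
    by apply: eq_count.
  by rewrite size_filter hc2 hsB hsA.
case: hQ => a [[hn hc] | [hin [st' [r' [hr' hg hst' hc]]]]].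
- rewrite hast hc (negbTE hn) subn0 addnn odd_double /=; split => // _.
  by rewrite -addnn dvdn_add // dvdn_mull.
- have hpr : part s r' - r' = m - st'.
    move: hg hst'; rewrite hN hl1 /m; lia.
  have hrr : r' <= part s r'.
    move: hg hst'; rewrite hN hl1 /m; lia.
  have hk : r' < (kdiag s).+1.
    rewrite ltnS /kdiag; apply: (@leq_bigmax_seq _ _ _ (fun i => i) r') => //.
    by rewrite mem_index_iota /plen; lia.
  have := hBG (Ordinal hk); rewrite /= (andP hr').1 /= /hook conj_eq //; last first.
    by rewrite -hl1.
  have -> : part s r' + part s r' + 1 - r' - r' = (m - st').*2.+1 by lia.
  move=> hnd.
  have -> : astar p s = (a * p).*2 + (m - st').*2.+1.
    by rewrite hast hc hin; lia.
  rewrite dvdn_addr; last by rewrite -muln2 mulnAC dvdn_mull.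
  rewrite oddD odd_double /= odd_double /=; split => //.
  by move=> h; rewrite h in hnd.
Qed.
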